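(* Let $k\ge 2$ be an integer and $n=6k$. There is no balanced permutation sequence of length $n$.
   Context: Let $n$ be a positive integer, $N$ a set of $n$ players and $[n]=\{1,\ldots,n\}$ a set of $n$ items. A permutation sequence of length $n$ is an ordered tuple $(\pi_1,\ldots,\pi_n)$ of bijections $\pi_t : N\to[n]$; on day $t$ player $i$ receives item $\pi_t(i)$. For $t\in[n]$ and $i\in N$, $Z_i^t$ is the multiset $\{\pi_1(i),\ldots,\pi_t(i)\}$, and for $j\in[t]$, $Z_i^t[j]$ is the $j$-th smallest element of $Z_i^t$ (counted with multiplicity). The sequence is called balanced if for every $t\in[n]$, every $i\in N$ and every $j\in[t]$: $Z_i^t[j]\le \lceil jn/t\rceil$. *)

(* Defs.v *)
From mathcomp Require Import all_boot all_fingroup.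
Set Implicit Arguments. Unset Strict Implicit. Unset Printing Implicit Defensive.

(* Players N and items [n] = {1..n} are both modelled by 'I_n;
   the item represented by x : 'I_n is the natural number x.+1.
   A permutation sequence of length n is a map from days 'I_n
   (day d represents day d.+1) to permutations of 'I_n. *)
Definition perm_seq (n : nat) := 'I_n -> {perm 'I_n}.

Definition ceil_div (a b : nat) : nat := (a + b - 1) %/ b.

(* Z_i^t as a sorted list (multiset with multiplicity), items in {1..n} *)
Definition Zsorted (n : nat) (pi : perm_seq n) (i : 'I_n) (t : nat) : seq nat :=
  sort leq (map (fun d : 'I_n => (pi d i : nat).+1)
                 (filter (fun d : 'I_n => (d : nat) < t) (enum 'I_n))).

(* Z_i^t[j] for 1 <= j <= t: j-th smallest element *)
Definition Zth (n : nat) (pi : perm_seq n) (i : 'I_n) (t j : nat) : nat :=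
  nth 0 (Zsorted pi i t) j.-1.

Definition balanced (n : nat) (pi : perm_seq n) : Prop :=
  forall (t : nat), 1 <= t <= n ->
  forall (i : 'I_n) (j : nat), 1 <= j <= t ->
    Zth pi i t j <= ceil_div (j * n) t.

(* Main.v *)
Require Import Defs.
From mathcomp Require Import all_boot all_fingroup.
From mathcomp Require Import zify.
Set Implicit Arguments. Unset Strict Implicit. Unset Printing Implicit Defensive.

Lemma sorted_count (s : seq nat) (j c : nat) :
  sorted leq s -> j < size s -> nth 0 s j <= c -> j < count (fun x => x <= c) s.
Proof.
elim: s j => [|x s IH] j //= Hs Hj Hn.
have Hmin : all (leq x) s by apply: order_path_min => //; exact: leq_trans.
have Hs' : sorted leq s by apply: path_sorted Hs.
case: j Hj Hn => [|j] Hj Hn /=.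
  by rewrite Hn.
have Hx : x <= c.
  have Hin : nth 0 s j \in s by apply: mem_nth.
  by apply: leq_trans (allP Hmin _ Hin) Hn.
rewrite Hx add1n ltnS; exact: IH.
Qed.

Lemma count_iota_lt (t n : nat) : t <= n -> count (fun x => x < t) (iota 0 n) = t.
Proof.
move=> Htn; rewrite -(subnKC Htn) iotaD count_cat add0n.
rewrite (eq_in_count (a2 := predT)); last by move=> x; rewrite mem_iota.
rewrite count_predT size_iota.
rewrite (eq_in_count (a2 := pred0)); last first.
  by move=> x; rewrite mem_iota /= => /andP [H1 _]; rewrite ltnNge H1.
by rewrite count_pred0 addn0.
Qed.

Lemma count_ord_lt (n t : nat) : t <= n -> count (fun d : 'I_n => d < t) (enum 'I_n) = t.
Proof.
move=> Htn; rewrite -{2}(@count_iota_lt t n Htn) -val_enum_ord count_map //.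
Qed.

Lemma ceil_div_le a b c : 0 < b -> a <= c * b -> ceil_div a b <= c.
Proof.
move=> Hb Ha; rewrite /ceil_div -ltnS ltn_divLR //. lia.
Qed.

Definition cntL n (pi : perm_seq n) (i : 'I_n) (t c : nat) :=
  count (fun d : 'I_n => (d < t) && (pi d i < c)) (enum 'I_n).

Lemma bal_cnt n (pi : perm_seq n) (i : 'I_n) (t j c : nat) :
  balanced pi -> 1 <= t <= n -> 1 <= j <= t -> ceil_div (j * n) t <= c ->
  j <= cntL pi i t c.
Proof.
move=> Hb Ht Hj Hc.
have H := Hb t Ht i j Hj.
have Hz : Zth pi i t j <= c by apply: leq_trans H Hc.
move: Hz; rewrite /Zth /Zsorted => Hz.
set L := map (fun d : 'I_n => (pi d i).+1) (filter (fun d : 'I_n => (d:nat) < t) (enum 'I_n)).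
have Hs := sort_sorted leq_total L.
have Hsz : j.-1 < size (sort leq L).
  rewrite size_sort size_map size_filter count_ord_lt; last by case/andP: Ht.
  case/andP: Hj => Hj1 Hj2; lia.
have := sorted_count Hs Hsz Hz.
rewrite count_sort count_map count_filter /cntL.
have -> : j.-1.+1 = j by case/andP: Hj => Hj1 _; lia.
move=> Hle; apply: leq_trans Hle _.
apply: eq_leq; apply: eq_count => d /=. by rewrite andbC.
Qed.

Lemma sum_count T (s : seq T) (p : pred T) : \sum_(x <- s) (p x : nat) = count p s.
Proof. elim: s => [|x s IH]; by rewrite ?big_nil ?big_cons ?IH. Qed.

Lemma count_perm_lt n (f : {perm 'I_n}) c : c <= n ->
  count (fun i : 'I_n => f i < c) (enum 'I_n) = c.
Proof.
move=> Hc.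
have -> : count (fun i : 'I_n => f i < c) (enum 'I_n)
        = count (fun x : 'I_n => x < c) (map f (enum 'I_n)).
  by rewrite [RHS]count_map.
have Hp : perm_eq (map f (enum 'I_n)) (enum 'I_n).
  apply: uniq_perm; first by rewrite map_inj_uniq ?enum_uniq //; exact: perm_inj.
    exact: enum_uniq.
  move=> x; rewrite mem_enum; apply/mapP; exists (f^-1 x)%g; first by rewrite mem_enum.
  by rewrite permKV.
by rewrite (seq.permP Hp) count_ord_lt.
Qed.

Lemma global_sum n (pi : perm_seq n) t c : c <= n -> t <= n ->
  \sum_(i <- enum 'I_n) cntL pi i t c = t * c.
Proof.
move=> Hc Ht.
rewrite (eq_bigr (fun i => \sum_(d <- enum 'I_n) (((d : nat) < t) && (pi d i < c) : nat))); last first.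
  by move=> i _; rewrite sum_count.
rewrite exchange_big /=.
rewrite (eq_bigr (fun d : 'I_n => ((d : nat) < t) * c)); last first.
  move=> d _; case: ((d : nat) < t) => /=.
    by rewrite mul1n sum_count count_perm_lt.
  by rewrite mul0n big1.
by rewrite -big_distrl /= sum_count count_ord_lt.
Qed.

Lemma sum_const2 T (s : seq T) : \sum_(x <- s) 2 = 2 * size s.
Proof. elim: s => [|x s IH]; first by rewrite big_nil.
rewrite big_cons /= IH; lia. Qed.

Lemma sum_lower n (F : 'I_n -> nat) (i0 : 'I_n) :
  (forall i, 2 <= F i) -> 3 <= F i0 -> (2 * n).+1 <= \sum_(i <- enum 'I_n) F i.
Proof.
move=> H2 H3.
have -> : (2 * n).+1 = \sum_(i <- enum 'I_n) (2 + (i == i0)).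
  rewrite big_split /= sum_count.
  have -> : \sum_(i <- enum 'I_n) 2 = 2 * n.
    by rewrite sum_const2 size_enum_ord.
  by rewrite (count_uniq_mem _ (enum_uniq _)) mem_enum addn1.
apply: leq_sum => i _; case: eqP => [->|_]; rewrite ?addn1 ?addn0 //.
Qed.

Lemma cnt_wit n (pi : perm_seq n) i t c : 0 < cntL pi i t c ->
  exists d : 'I_n, (d < t) && (pi d i < c).
Proof.
rewrite /cntL -has_count => /hasP [d _ Hd]; by exists d.
Qed.

Lemma three_le n (p : pred 'I_n) (a b c : 'I_n) :
  p a -> p b -> p c -> a != b -> a != c -> b != c -> 3 <= count p (enum 'I_n).
Proof.
move=> pa pb pc ab ac bc.
rewrite -size_filter.
have -> : 3 = size [:: a; b; c] by [].
apply: uniq_leq_size.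
  by rewrite /= !inE negb_or ab ac bc.
by move=> x; rewrite !inE mem_filter mem_enum => /or3P [] /eqP ->; rewrite ?pa ?pb ?pc.
Qed.

Theorem mainTheorem2 (k : nat) : 2 <= k ->
  ~ exists pi : perm_seq (6 * k), balanced pi.
Proof.
move=> Hk [pi Hb].
set tb := (3 * k).+1 %/ 2.
have Htb1 : 0 < tb by rewrite /tb; lia.
have Htb2 : tb < 2 * k by rewrite /tb; lia.
have Htb3 : 6 * k <= 4 * tb by rewrite /tb; lia.
have F1 : forall i, 1 <= cntL pi i (3 * k) 2.
  move=> i; apply: bal_cnt => //; try lia.
  apply: ceil_div_le; lia.
have F2 : forall i, 2 <= cntL pi i (3 * k) 4.
  move=> i; apply: bal_cnt => //; try lia.
  apply: ceil_div_le; lia.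
have F3 : forall i, 1 <= cntL pi i (2 * k) 3.
  move=> i; apply: bal_cnt => //; try lia.
  apply: ceil_div_le; lia.
have F4 : forall i, 1 <= cntL pi i tb 4.
  move=> i; apply: bal_cnt => //; try lia.
  apply: ceil_div_le; lia.
have G : forall i, cntL pi i (3 * k) 4 < 3.
  move=> i0; rewrite ltnNge; apply/negP => H3.
  have := sum_lower F2 H3.
  rewrite global_sum; lia.
have C : forall i : 'I_(6 * k), (forall d : 'I_(6 * k), d < 2 * k -> 2 <= pi d i) ->
           exists d : 'I_(6 * k), (d < tb) && (pi d i == 2 :> nat).
  move=> i Hi.
  have [d0 /andP [H0a H0b]] := cnt_wit (F1 i).
  have [d1 /andP [H1a H1b]] := cnt_wit (F3 i).
  have [d2 /andP [H2a H2b]] := cnt_wit (F4 i).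
  have H0c : 2 * k <= d0.
    rewrite leqNgt; apply/negP => H; have := Hi d0 H; lia.
  have H1c := Hi d1 H1a.
  have H2c : 2 <= pi d2 i by apply: Hi; lia.
  case E : (pi d2 i == 2 :> nat); first by exists d2; rewrite H2a E.
  exfalso.
  have := G i; rewrite ltnNge => /negP; apply.
  apply: (three_le (a := d0) (b := d1) (c := d2)).
  - rewrite /=; apply/andP; split; lia.
  - rewrite /=; apply/andP; split; lia.
  - rewrite /=; apply/andP; split; lia.
  - apply/eqP => Heq; move: H0b H1c; rewrite Heq; lia.
  - apply/eqP => Heq; move: H0b H2c; rewrite Heq; lia.
  - apply/eqP => Heq; move: H1b H1c E; rewrite Heq; lia.
pose g (i : 'I_(6 * k)) : nat :=
  match [pick d : 'I_(6 * k) | (d < 2 * k) && (pi d i < 2)] with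
  | Some d => d * 2 + pi d i
  | None => 4 * k + match [pick d : 'I_(6 * k) | (d < tb) && (pi d i == 2 :> nat)] with
                    | Some d => (d : nat) | None => 0 end
  end.
have C' : forall i, (forall d : 'I_(6 * k), ~~ ((d < 2 * k) && (pi d i < 2))) ->
    exists2 d : 'I_(6 * k), (d < tb) && (pi d i == 2 :> nat) &
      [pick d : 'I_(6 * k) | (d < tb) && (pi d i == 2 :> nat)] = Some d.
  move=> i Hn.
  have [|d Hd] := C i.
    move=> d Hd; have := Hn d; rewrite Hd /= -leqNgt //.
  case: pickP => [e He|Hne]; first by exists e.
  by have := Hne d; rewrite Hd.
have Gb : forall i, g i < 4 * k + tb.
  move=> i; rewrite /g; case: (pickP (fun d : 'I_(6 * k) => (d < 2 * k) && (pi d i < 2))) => [d /andP [Hd1 Hd2]|Hn]; first lia.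
  have [e /andP [He1 _] ->] := C' i (fun d => negbT (Hn d)); lia.
have Ginj : injective g.
  move=> i i'; rewrite /g.
  case: (pickP (fun d : 'I_(6 * k) => (d < 2 * k) && (pi d i < 2))) => [d /andP [Hd1 Hd2]|Hn];
  case: (pickP (fun d : 'I_(6 * k) => (d < 2 * k) && (pi d i' < 2))) => [d' /andP [Hd1' Hd2']|Hn'].
  - move=> Heq.
    have Edd : (d : nat) = d' by lia.
    have Epp : (pi d i : nat) = pi d' i' by lia.
    have E2 : d = d' by apply: ord_inj.
    subst d'; apply: (@perm_inj _ (pi d)); exact: val_inj.
  - have [e /andP [He1 _] ->] := C' i' (fun d => negbT (Hn' d)); lia.
  - have [e /andP [He1 _] ->] := C' i (fun d => negbT (Hn d)); lia.
  - have [e /andP [He1 He2] ->] := C' i (fun d => negbT (Hn d)).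
    have [e' /andP [He1' He2'] ->] := C' i' (fun d => negbT (Hn' d)).
    move=> Heq.
    have E2 : e = e' by apply: ord_inj; lia.
    subst e'; apply: (@perm_inj _ (pi e)); apply: val_inj.
    by rewrite /= (eqP He2) (eqP He2').
have U : uniq (map g (enum 'I_(6 * k))) by rewrite map_inj_uniq // enum_uniq.
have Hsub : {subset map g (enum 'I_(6 * k)) <= iota 0 (4 * k + tb)}.
  move=> x /mapP [i _ ->]; rewrite mem_iota add0n; exact: Gb.
have := uniq_leq_size U Hsub.
rewrite size_map size_enum_ord size_iota; lia.
Qed.
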